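(* Let $u\in H\setminus\{0\}$, let $\tau_u>0$ be the unique positive number with $\tau_u u\in\mathcal{N}_\infty$ and $t_u>0$ the unique positive number with $t_u u\in\mathcal{N}$. Then $\tau_u\le t_u$.
   Context: Let $V,K:\mathbb{R}^3\to\mathbb{R}$ be measurable with: $V(x)\to V_\infty\ge 0$ as $|x|\to\infty$, $V(x)\ge V_\infty$ for all $x$, $V-V_\infty\in L^{3/2}(\mathbb{R}^3)$; $K(x)\to0$ as $|x|\to\infty$, $K\ge0$, $K\not\equiv0$, $K\in L^2(\mathbb{R}^3)$. $H=H^1(\mathbb{R}^3)$ if $V_\infty>0$ and $H=\mathcal{D}^{1,2}(\mathbb{R}^3)$ (completion of $C_0^\infty$ under $(\int|\nabla u|^2)^{1/2}$) if $V_\infty=0$. For $u\in H$, $\phi_u\in\mathcal{D}^{1,2}(\mathbb{R}^3)$ is the unique solution of $-\Delta\phi=K(x)u^2$, i.e. $\phi_u(x)=\frac1{4\pi}\int_{\mathbb{R}^3}\frac{K(y)u^2(y)}{|x-y|}dy$. $I(u)=\frac12\int(|\nabla u|^2+V(x)u^2)dx+\frac14\int K\phi_u u^2dx-\frac16\int u^6dx$, $\mathcal{N}=\{u\in H\setminus\{0\}:I'(u)[u]=0\}$. $I_\infty(u)=\frac12\int|\nabla u|^2dx-\frac16\int u^6dx$, $\mathcal{N}_\infty=\{u\in H\setminus\{0\}:I_\infty'(u)[u]=0\}$. For each $u\ne0$ there are unique $t_u,\tau_u>0$ with $t_uu\in\mathcal{N}$, $\tau_uu\in\mathcal{N}_\infty$.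 *)

(* Defs.v *)
From HB Require Import structures.
From mathcomp Require Import all_boot all_order all_algebra.
From mathcomp Require Import all_classical all_reals all_analysis.
Set Implicit Arguments. Unset Strict Implicit. Unset Printing Implicit Defensive.
Import Order.TTheory GRing.Theory Num.Theory.
Import numFieldNormedType.Exports.
Local Open Scope classical_set_scope.
Local Open Scope ring_scope.

Section R3.
Variable R : realType.

Definition pt := ((R * R) * R)%type.

Definition leb3 := ((@lebesgue_measure R \x @lebesgue_measure R) \x @lebesgue_measure R)%E.

Definition coord (i : 'I_3) (x : pt) : R :=
  if val i == 0%N then x.1.1 else if val i == 1%N then x.1.2 else x.2.

Definition norm3 (x : pt) : R := Num.sqrt (x.1.1 ^+ 2 + x.1.2 ^+ 2 + x.2 ^+ 2).
Definition dist3 (x y : pt) : R :=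
  norm3 ((x.1.1 - y.1.1, x.1.2 - y.1.2), x.2 - y.2).

Definition evec (i : 'I_3) : pt :=
  ((if val i == 0%N then 1 else 0, if val i == 1%N then 1 else 0),
   if val i == 2%N then 1 else 0).

Definition pderiv (i : 'I_3) (f : pt -> R) : pt -> R := fun x => 'D_(evec i) f x.

Definition smooth3 (f : pt -> R) : Prop :=
  forall s : seq 'I_3, let g := foldr pderiv f s in
    continuous g /\ forall (i : 'I_3) (x : pt), derivable g x (evec i).

Definition compact_support3 (f : pt -> R) : Prop :=
  exists r : R, forall x, r < norm3 x -> f x = 0.

Definition test_fun (f : pt -> R) : Prop := smooth3 f /\ compact_support3 f.

Definition inLp (p : R) (f : pt -> R) : Prop :=
  measurable_fun setT f /\
  leb3.-integrable setT (fun x => ((`|f x|) `^ p)%:E).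

Definition weak_grad (u : pt -> R) (g : 'I_3 -> pt -> R) : Prop :=
  forall (i : 'I_3) (phi : pt -> R), test_fun phi ->
    leb3.-integrable setT (fun x => (u x * pderiv i phi x)%:E) /\
    leb3.-integrable setT (fun x => (g i x * phi x)%:E) /\
    Rintegral leb3 setT (fun x => u x * pderiv i phi x)
    = - Rintegral leb3 setT (fun x => g i x * phi x).

(* membership in H, with g the weak gradient of u:
   D^{1,2}(R^3) = {u in L^6 : grad u in L^2}        (Vinf = 0),
   H^1(R^3)     = {u in L^2 : grad u in L^2} (Vinf > 0), which is contained in L^6
   by the Sobolev embedding, so the L^6 clause is redundant in that case. *)
Definition inH (Vinf : R) (u : pt -> R) (g : 'I_3 -> pt -> R) : Prop :=
  [/\ weak_grad u g, (forall i, inLp 2 (g i)), inLp 6 u & (0 < Vinf -> inLp 2 u)].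

Definition nonzero (u : pt -> R) : Prop := ~ leb3.-negligible [set x | u x != 0].

Definition gradsq (g : 'I_3 -> pt -> R) (x : pt) : R := \sum_(i < 3) g i x ^+ 2.

Definition phi (K u : pt -> R) (x : pt) : R :=
  (4 * pi)^-1 * Rintegral leb3 setT (fun y => K y * u y ^+ 2 / dist3 x y).

Definition Ifun (V K : pt -> R) (u : pt -> R) (g : 'I_3 -> pt -> R) : R :=
  2^-1 * Rintegral leb3 setT (fun x => gradsq g x + V x * u x ^+ 2)
  + 4^-1 * Rintegral leb3 setT (fun x => K x * phi K u x * u x ^+ 2)
  - 6^-1 * Rintegral leb3 setT (fun x => u x ^+ 6).

Definition Iinf (u : pt -> R) (g : 'I_3 -> pt -> R) : R :=
  2^-1 * Rintegral leb3 setT (gradsq g)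
  - 6^-1 * Rintegral leb3 setT (fun x => u x ^+ 6).

Definition sc (s : R) (u : pt -> R) : pt -> R := fun x => s * u x.
Definition scg (s : R) (g : 'I_3 -> pt -> R) : 'I_3 -> pt -> R := fun i x => s * g i x.

(* J'(u)[u] computed as the derivative at s = 0 of s |-> J(u + s u) *)
Definition dir_self (J : (pt -> R) -> ('I_3 -> pt -> R) -> R)
  (u : pt -> R) (g : 'I_3 -> pt -> R) : R -> R :=
  fun s => J (sc (1 + s) u) (scg (1 + s) g).

Definition inNehari (Vinf : R) (V K : pt -> R) (u : pt -> R) (g : 'I_3 -> pt -> R) : Prop :=
  inH Vinf u g /\ nonzero u /\
  derivable (dir_self (Ifun V K) u g) 0 1 /\ 'D_1 (dir_self (Ifun V K) u g) 0 = 0.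

Definition inNehari_inf (Vinf : R) (u : pt -> R) (g : 'I_3 -> pt -> R) : Prop :=
  inH Vinf u g /\ nonzero u /\
  derivable (dir_self Iinf u g) 0 1 /\ 'D_1 (dir_self Iinf u g) 0 = 0.

End R3.

(* Main.v *)
Require Import Defs.
From HB Require Import structures.
From mathcomp Require Import all_boot all_order all_algebra.
From mathcomp Require Import all_classical all_reals all_analysis.
From mathcomp Require Import ring lra measurable_realfun.
Import Order.TTheory GRing.Theory Num.Theory.
Import numFieldNormedType.Exports.
Local Open Scope classical_set_scope.
Local Open Scope ring_scope.
Import HBNNSimple.

Section Sc.
Context d (T : measurableType d) (R : realType).
Variable mu : {measure set T -> \bar R}.

Lemma int_scale_le (f : T -> R) (c : R) : 0 < c -> (forall x, 0 <= f x) ->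
  (\int[mu]_(x in setT) ((c * f x)%:E) <= c%:E * \int[mu]_(x in setT) (f x)%:E)%E.
Proof.
move=> c0 f0.
rewrite !ge0_integralTE //; last by move=> x; rewrite lee_fin mulr_ge0 // ltW.
apply: ge_ereal_sup => _ [h hle <-].
have ci0 : 0 <= c^-1 by rewrite invr_ge0 ltW.
pose h' := scale_nnsfun h ci0.
have -> : sintegral mu h = (c%:E * sintegral mu h')%E.
  rewrite -sintegralrM; apply: eq_sintegral => x /=.
  by rewrite mulrA mulfV ?gt_eqF // mul1r.
rewrite lee_pmul2l ?lte_fin //.
apply: ereal_sup_ubound; exists h' => // x /=.
rewrite lee_fin ler_pdivrMl //. by have := hle x; rewrite lee_fin.
Qed.
Lemma int_scale (f : T -> R) (c : R) : 0 < c -> (forall x, 0 <= f x) ->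
  (\int[mu]_(x in setT) ((c * f x)%:E) = c%:E * \int[mu]_(x in setT) (f x)%:E)%E.
Proof.
move=> c0 f0; apply/eqP; rewrite eq_le int_scale_le //=.
have ci0 : 0 < c^-1 by rewrite invr_gt0.
have h := @int_scale_le (fun x => c * f x) c^-1 ci0
   (fun x => mulr_ge0 (ltW c0) (f0 x)).
rewrite -lee_pdivlMl //.
apply: le_trans h; rewrite le_eqVlt; apply/orP; left; apply/eqP; apply: eq_integral => x _.
by rewrite mulrA mulVf ?gt_eqF // mul1r.
Qed.

Lemma Rint_scale (f : T -> R) (c : R) : 0 <= c -> (forall x, 0 <= f x) ->
  Rintegral mu setT (fun x => c * f x) = c * Rintegral mu setT f.
Proof.
rewrite le_eqVlt => /predU1P[<- _|c0 f0].
  rewrite mul0r; under eq_Rintegral do rewrite mul0r.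
  by rewrite /Rintegral integral0.
rewrite /Rintegral int_scale //.
case: (\int[mu]_(x in setT) (f x)%:E)%E => [r||] //=.
- by rewrite mulry gtr0_sg // mul1e /= mulr0.
- by rewrite mulrNy gtr0_sg // mul1e /= mulr0.
Qed.
End Sc.

Section L.
Variable R : realType.
Local Notation leb := (@leb3 R).

Lemma gradsq_ge0 (g : 'I_3 -> pt R -> R) x : 0 <= gradsq g x.
Proof. by apply: sumr_ge0 => i _; exact: sqr_ge0. Qed.

Lemma gradsq_scg c (g : 'I_3 -> pt R -> R) x : gradsq (scg c g) x = c ^+ 2 * gradsq g x.
Proof. by rewrite /gradsq mulr_sumr; apply: eq_bigr => i _; rewrite /scg exprMn. Qed.

Lemma Rint_grad c (g : 'I_3 -> pt R -> R) :
  Rintegral leb setT (gradsq (scg c g)) = c ^+ 2 * Rintegral leb setT (gradsq g).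
Proof.
rewrite -Rint_scale ?sqr_ge0 //; last exact: gradsq_ge0.
by apply: eq_Rintegral => x _; exact: gradsq_scg.
Qed.

Lemma Rint_u6 c (u : pt R -> R) :
  Rintegral leb setT (fun x => sc c u x ^+ 6) = c ^+ 6 * Rintegral leb setT (fun x => u x ^+ 6).
Proof.
have e6 (y : R) : y ^+ 6 = (y ^+ 2) ^+ 3 by rewrite -exprM.
rewrite -Rint_scale; last by move=> x; rewrite e6 exprn_ge0 ?sqr_ge0.
  by apply: eq_Rintegral => x _; rewrite /sc exprMn.
by rewrite e6 exprn_ge0 ?sqr_ge0.
Qed.

Lemma Rint_E (V : pt R -> R) (V0 : forall x, 0 <= V x) c (u : pt R -> R) g :
  Rintegral leb setT (fun x => gradsq (scg c g) x + V x * sc c u x ^+ 2)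
  = c ^+ 2 * Rintegral leb setT (fun x => gradsq g x + V x * u x ^+ 2).
Proof.
rewrite -Rint_scale ?sqr_ge0 //; last first.
  by move=> x; rewrite addr_ge0 ?gradsq_ge0 // mulr_ge0 ?sqr_ge0.
apply: eq_Rintegral => x _; rewrite gradsq_scg /sc exprMn; ring.
Qed.

Lemma dist3_ge0 (x y : pt R) : 0 <= dist3 x y.
Proof. exact: sqrtr_ge0. Qed.

Lemma phi_sc (K : pt R -> R) (K0 : forall x, 0 <= K x) c u x :
  phi K (sc c u) x = c ^+ 2 * phi K u x.
Proof.
rewrite /phi mulrCA; congr (_ * _); rewrite -Rint_scale ?sqr_ge0 //; last first.
  by move=> y; rewrite divr_ge0 ?dist3_ge0 // mulr_ge0 ?sqr_ge0.
apply: eq_Rintegral => y _; rewrite /sc exprMn; ring.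
Qed.

Lemma phi_ge0 (K : pt R -> R) (K0 : forall x, 0 <= K x) u x : 0 <= phi K u x.
Proof.
rewrite /phi mulr_ge0 // ?invr_ge0 ?mulr_ge0 ?pi_ge0 //.
apply: Rintegral_ge0 => y _; rewrite divr_ge0 ?dist3_ge0 // mulr_ge0 ?sqr_ge0 //.
Qed.

Lemma Rint_C (K : pt R -> R) (K0 : forall x, 0 <= K x) c (u : pt R -> R) :
  Rintegral leb setT (fun x => K x * phi K (sc c u) x * sc c u x ^+ 2)
  = c ^+ 4 * Rintegral leb setT (fun x => K x * phi K u x * u x ^+ 2).
Proof.
rewrite -Rint_scale ?exprn_even_ge0 //; last first.
  move=> x; apply: mulr_ge0; [apply: mulr_ge0; [exact: K0 | exact: phi_ge0] | exact: sqr_ge0].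
apply: eq_Rintegral => x _; rewrite phi_sc // /sc exprMn; ring.
Qed.

Lemma dpoly (a b c : R) :
  'D_1 (fun s : R => a * (1+s)^+2 + b * (1+s)^+4 + c*(1+s)^+6) 0 = 2*a + 4*b + 6*c.
Proof.
rewrite derive_val.
rewrite !addr0 !add0r !mulr1 !scale1r. rewrite -![_ *: _]/(_ * _). ring.
Qed.


Lemma young32 (a b : R) : 0 <= a -> 0 <= b -> a * b <= a `^ (3/2) + b ^+ 3.
Proof.
move=> a0 b0.
have e : a `^ (3/2) = a * Num.sqrt a.
  have [->|an0] := eqVneq a 0.
    by rewrite powR0 ?mul0r // mulf_neq0 // invr_neq0.
  rewrite (_ : 3/2 = 1 + 2^-1); last by field.
  by rewrite powRD ?an0 ?implybT // powRr1 // powR12_sqrt.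
have b30 : 0 <= b ^+ 3 by rewrite exprn_ge0.
have [h|h] := lerP a (b ^+ 2).
  apply: le_trans (_ : _ <= b ^+ 3) _; last by rewrite lerDr powR_ge0.
  by apply: le_trans (ler_wpM2r b0 h) _; rewrite -exprSr.
have ap : 0 < a by apply: le_lt_trans h; rewrite sqr_ge0.
have hb : b < Num.sqrt a.
  by rewrite -[b]ger0_norm // -sqrtr_sqr ltr_sqrt.
apply: le_trans (_ : _ <= a `^ (3/2)) _; last by rewrite lerDl.
by rewrite e ler_wpM2l // ltW.
Qed.

Lemma int_u6 (u : pt R -> R) : inLp 6 u -> leb.-integrable setT (fun x => (u x ^+ 6)%:E).
Proof.
case=> _ hi; apply: eq_integrable hi => // x _.
by rewrite powR_mulrn // -normrX ger0_norm // -[6%N]/(2 * 3)%N exprM exprn_ge0 // sqr_ge0.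
Qed.

Lemma int_p2 (f : pt R -> R) : inLp 2 f -> leb.-integrable setT (fun x => (f x ^+ 2)%:E).
Proof.
case=> _ hi; apply: eq_integrable hi => // x _.
by rewrite powR_mulrn // real_normK // num_real.
Qed.


Lemma int_Vu2 (Vinf : R) (V u : pt R -> R) : 0 <= Vinf -> (forall x, Vinf <= V x) ->
  measurable_fun setT V -> inLp (3/2) (fun x => V x - Vinf) -> inLp 6 u ->
  (0 < Vinf -> inLp 2 u) -> leb.-integrable setT (fun x => (V x * u x ^+ 2)%:E).
Proof.
move=> Vi0 Vge mV [_ h1] hu6 hu2.
have h2 := @int_u6 _ hu6.
have h3 : leb.-integrable setT (fun x => (Vinf * u x ^+ 2)%:E).
  have [Vz|Vp] := eqVneq Vinf 0.
    apply: eq_integrable (integrable0 leb setT) => // x _.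
    by rewrite Vz mul0r.
  have Vp' : 0 < Vinf by rewrite lt_neqAle eq_sym Vp.
  apply: eq_integrable (integrableZl measurableT Vinf (@int_p2 _ (hu2 Vp'))) => // x _.
have mU := proj1 hu6.
apply: le_integrable (integrableD measurableT (integrableD measurableT h1 h2) h3) => //.
  apply/measurable_EFinP; apply: measurable_funM => //; exact: measurable_funX.
move=> x _ /=.
have Vx : 0 <= V x by apply: le_trans (Vge x).
have u20 : 0 <= u x ^+ 2 by exact: sqr_ge0.
have hV : 0 <= V x - Vinf by rewrite subr_ge0.
have u60 : 0 <= u x ^+ 6 by rewrite exprn_even_ge0.
have vu0 : 0 <= Vinf * u x ^+ 2 by rewrite mulr_ge0.
rewrite lee_fin (ger0_norm (mulr_ge0 Vx u20)) (ger0_norm hV) ger0_norm; last first.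
  by rewrite !addr_ge0 // powR_ge0.
have -> : V x * u x ^+ 2 = (V x - Vinf) * u x ^+ 2 + Vinf * u x ^+ 2 by ring.
rewrite lerD2r.
have := young32 _ _ hV u20.
by rewrite -exprM.
Qed.

Lemma u6_pos (u : pt R -> R) : inLp 6 u -> nonzero u ->
  0 < Rintegral leb setT (fun x => u x ^+ 6).
Proof.
move=> hu nz.
have h6 := int_u6 _ hu.
have f0 x : 0 <= u x ^+ 6 by rewrite exprn_even_ge0.
rewrite lt_neqAle Rintegral_ge0 // andbT; apply/negP => /eqP H.
apply: nz.
have fin := integrable_fin_num measurableT h6.
have I0 : (\int[leb]_(x in setT) `|(u x ^+ 6)%:E|)%E = 0.
  under eq_integral do rewrite gee0_abs ?lee_fin //.
  by rewrite -(fineK fin); exact: (congr1 EFin (esym H)).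
have := (ae_eq_integral_abs leb measurableT (measurable_int _ h6)).1 I0.
move=> H0; apply: (negligibleS _ H0) => x /= ux /(_ I) /eqP.
by rewrite eqe expf_eq0 /= (negPf ux).
Qed.


Lemma int_grad (g : 'I_3 -> pt R -> R) : (forall i, inLp 2 (g i)) ->
  leb.-integrable setT (EFin \o gradsq g).
Proof.
move=> hg.
have h i := @int_p2 _ (hg i).
apply: eq_integrable (integrableD measurableT (integrableD measurableT (h 0) (h 1)) (h 2)) => // x _.
rewrite /= /gradsq !big_ord_recr big_ord0 /= -!EFinD; congr EFin. rewrite add0r; congr (_ + _ + _); congr (g _ x ^+ 2); exact/val_inj.
Qed.

Lemma alg_I (a d s tau : R) : 2^-1 * ((1+s)^+2 * (tau^+2 * a)) - 6^-1 * ((1+s)^+6 * (tau^+6 * d)) = 2^-1 * tau^+2 * a * (1+s)^+2 + 0*(1+s)^+4 + -(6^-1*tau^+6*d) * (1+s)^+6.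
Proof. ring. Qed.

Lemma alg_F (e c d s t : R) : 2^-1 * ((1+s)^+2 * (t^+2 * e)) + 4^-1 * ((1+s)^+4 * (t^+4 * c)) - 6^-1 * ((1+s)^+6*(t^+6*d)) = (2^-1*t^+2*e)*(1+s)^+2 + (4^-1*t^+4*c)*(1+s)^+4 + -(6^-1*t^+6*d)*(1+s)^+6.
Proof. ring. Qed.

Lemma final_alg (A E C D tau t : R) : 0 < tau -> 0 < t -> 0 < D -> 0 <= C -> A <= E ->
  2*(2^-1*tau^+2*A) + 4*0 + 6*(-(6^-1*tau^+6*D)) = 0 ->
  2*(2^-1*t^+2*E) + 4*(4^-1*t^+4*C) + 6*(-(6^-1*t^+6*D)) = 0 -> tau <= t.
Proof.
move=> tau_gt0 t_gt0 Dp C0 EA h1 h2.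
have tau2 : tau ^+ 2 != 0 by rewrite expf_neq0 // gt_eqF.
have t2 : t ^+ 2 != 0 by rewrite expf_neq0 // gt_eqF.
have hA : A = tau ^+ 4 * D.
  apply: (mulfI tau2); rewrite -[LHS]subr0 -h1; by field.
have hE : E + t ^+ 2 * C = t ^+ 4 * D.
  apply: (mulfI t2); rewrite -[LHS]subr0 -h2; by field.
have h4 : tau ^+ 4 <= t ^+ 4.
  rewrite -(ler_pM2r Dp) -hA -hE; apply: le_trans EA _.
  by rewrite lerDl mulr_ge0 // sqr_ge0.
by move: h4; rewrite ler_pXn2r // nnegrE ltW.
Qed.

Lemma lemma2p7_aux (Vinf : R) (V K : pt R -> R)
  (mV : measurable_fun setT V) (mK : measurable_fun setT K)
  (V_lim : forall e : R, 0 < e -> exists r : R,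
      forall x, r < norm3 x -> `|V x - Vinf| < e)
  (Vinf_ge0 : 0 <= Vinf) (V_ge : forall x, Vinf <= V x)
  (V_L32 : inLp (3 / 2) (fun x => V x - Vinf))
  (K_lim : forall e : R, 0 < e -> exists r : R,
      forall x, r < norm3 x -> `|K x| < e)
  (K_ge0 : forall x, 0 <= K x) (K_nz : nonzero K) (K_L2 : inLp 2 K)
  (u : pt R -> R) (g : 'I_3 -> pt R -> R)
  (uH : inH Vinf u g) (u_nz : nonzero u)
  (tau t : R) (tau_gt0 : 0 < tau) (t_gt0 : 0 < t)
  (tauN : inNehari_inf Vinf (sc tau u) (scg tau g))
  (tN : inNehari Vinf V K (sc t u) (scg t g)) :
  tau <= t.
Proof.
case: uH => _ hg hu6 hu2.
case: tauN => _ [_ [_ Dtau]].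
case: tN => _ [_ [_ Dt]].
have V0 x : 0 <= V x by apply: le_trans (V_ge x).
have eI : dir_self (@Iinf R) (sc tau u) (scg tau g) = fun s =>
   (2^-1 * tau^+2 * Rintegral leb setT (gradsq g)) * (1+s)^+2 + 0 * (1+s)^+4
   + (- (6^-1 * tau^+6 * Rintegral leb setT (fun x => u x ^+ 6))) * (1+s)^+6.
  apply/funext => s; rewrite /dir_self /Iinf Rint_grad Rint_grad Rint_u6 Rint_u6.
  exact: alg_I.
have eF : dir_self (Ifun V K) (sc t u) (scg t g) = fun s =>
   (2^-1 * t^+2 * Rintegral leb setT (fun x => gradsq g x + V x * u x ^+ 2)) * (1+s)^+2
   + (4^-1 * t^+4 * Rintegral leb setT (fun x => K x * phi K u x * u x ^+ 2)) * (1+s)^+4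
   + (- (6^-1 * t^+6 * Rintegral leb setT (fun x => u x ^+ 6))) * (1+s)^+6.
  apply/funext => s; rewrite /dir_self /Ifun (Rint_E _ V0) (Rint_E _ V0).
  rewrite (Rint_C _ K_ge0) (Rint_C _ K_ge0) Rint_u6 Rint_u6.
  exact: alg_F.
rewrite eI dpoly in Dtau.
rewrite eF dpoly in Dt.
have Dpos := u6_pos _ hu6 u_nz.
have C0 : 0 <= Rintegral leb setT (fun x => K x * phi K u x * u x ^+ 2).
  apply: Rintegral_ge0 => x _.
  by apply: mulr_ge0; [apply: mulr_ge0; [exact: K_ge0 | exact: phi_ge0] | exact: sqr_ge0].
have EA : Rintegral leb setT (gradsq g) <= Rintegral leb setT (fun x => gradsq g x + V x * u x ^+ 2).
  rewrite RintegralD //; first last.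
  - exact: (int_Vu2 _ _ _ Vinf_ge0 V_ge mV V_L32 hu6 hu2).
  - exact: (int_grad _ hg).
  rewrite lerDl; apply: Rintegral_ge0 => x _; exact: mulr_ge0 (V0 x) (sqr_ge0 _).
exact: final_alg tau_gt0 t_gt0 Dpos C0 EA Dtau Dt.
Qed.

End L.

Theorem lemma2p7 (R : realType) (Vinf : R) (V K : pt R -> R)
  (mV : measurable_fun setT V) (mK : measurable_fun setT K)
  (V_lim : forall e : R, 0 < e -> exists r : R,
      forall x, r < norm3 x -> `|V x - Vinf| < e)
  (Vinf_ge0 : 0 <= Vinf) (V_ge : forall x, Vinf <= V x)
  (V_L32 : inLp (3 / 2) (fun x => V x - Vinf))
  (K_lim : forall e : R, 0 < e -> exists r : R,
      forall x, r < norm3 x -> `|K x| < e)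
  (K_ge0 : forall x, 0 <= K x) (K_nz : nonzero K) (K_L2 : inLp 2 K)
  (u : pt R -> R) (g : 'I_3 -> pt R -> R)
  (uH : inH Vinf u g) (u_nz : nonzero u)
  (tau t : R) (tau_gt0 : 0 < tau) (t_gt0 : 0 < t)
  (tauN : inNehari_inf Vinf (sc tau u) (scg tau g))
  (tN : inNehari Vinf V K (sc t u) (scg t g)) :
  tau <= t.
Proof. exact: (@lemma2p7_aux R Vinf V K mV mK V_lim Vinf_ge0 V_ge V_L32 K_lim K_ge0 K_nz K_L2 u g uH u_nz tau t tau_gt0 t_gt0 tauN tN). Qed.
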